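(* For every CFTR program $\mathtt{p}$ there is a polynomial $\pi$ such that for every input $x\in\{0,1\}^*$ on which $\mathtt{p}$ terminates, $\mathit{time}_{\mathtt{p}}(x) \le \pi(|x|)$.
   Context: CF (''cons-free'') is a first-order, call-by-value functional language over booleans and bit lists $\{0,1\}^*$. A program is a finite sequence of mutually recursive function definitions $\mathtt{f\ x1 \dots xm = e}$ ($m\ge0$), the first being a one-argument entry function. Expressions are $\mathtt{True}$, $\mathtt{False}$, $\mathtt{[]}$, variables, base calls $\mathtt{not\ e}$, $\mathtt{null\ e}$, $\mathtt{head\ e}$, $\mathtt{tail\ e}$, conditionals $\mathtt{if\ e_0\ then\ e_1\ else\ e_2}$, and calls $\mathtt{f\ e_1\dots e_m}$ of defined functions; there are no list constructors. Semantics is standard big-step call-by-value evaluation given by inference rules deriving $\mathtt{p},\rho\vdash\mathtt{e}\to v$; the derivation tree for the run on input $x$ is the computation tree $\mathcal{T}^{\mathtt{p},x}$, and the native running time $\mathit{time}_{\mathtt{p}}(x)$ is the number of nodes of $\mathcal{T}^{\mathtt{p},x}$. Tail form is defined via $\alpha:\mathrm{Exp}\to\{X,T,N\}$ with order $X<T<N$: $\alpha(\text{constant or variable})=X$; $\alpha(\mathtt{base\ e})=X$ if $\alpha(\mathtt{e})=X$, else $N$; $\alpha(\mathtt{f\ e_1\dots e_m})=T$ if all $\alpha(\mathtt{e_i})=X$, else $N$; $\alpha(\mathtt{if\ e_0\ then\ e_1\ else\ e_2})=\max(\alpha(\mathtt{e_1}),\alpha(\mathtt{e_2}))$ if $\alpha(\mathtt{e_0})=X$,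 else $N$. A CFTR program is a CF program in which every function definition $\mathtt{f\ x1\dots xm=e}$ has $\alpha(\mathtt{e})\in\{X,T\}$. *)

(* Defs.v *)
From HB Require Import structures.
From mathcomp Require Import all_boot all_order all_algebra.
Set Implicit Arguments. Unset Strict Implicit. Unset Printing Implicit Defensive.

(* Values: booleans True/False and bit lists in {0,1}^* (bit 0 = false, 1 = true). *)
Inductive value : Type :=
| VB : bool -> value
| VL : seq bool -> value.

(* Variables are referred to by their position (0-based) in the
   parameter list x1 ... xm of the enclosing definition; defined functions are
   referred to by their position (0-based) in the program. *)
Inductive expr : Type :=
| ETrue : expr
| EFalse : expr
| ENil : expr
| EVar : nat -> expr
| ENot : expr -> expr
| ENull : expr -> expr
| EHead : expr -> expr
| ETail : expr -> expr
| EIf : expr -> expr -> expr -> expr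
| ECall : nat -> seq expr -> expr.

(* A program: a finite sequence of definitions  f x1 .. xm = e, given as (m, e). *)
Definition prog := seq (nat * expr).

Fixpoint wf_expr (ar : seq nat) (m : nat) (e : expr) : bool :=
  match e with
  | ETrue | EFalse | ENil => true
  | EVar i => i < m
  | ENot e | ENull e | EHead e | ETail e => wf_expr ar m e
  | EIf e0 e1 e2 => [&& wf_expr ar m e0, wf_expr ar m e1 & wf_expr ar m e2]
  | ECall f args =>
      [&& f < size ar, nth 0 ar f == size args &
        (fix wfl (l : seq expr) : bool :=
           match l with nil => true | a :: l' => wf_expr ar m a && wfl l' end) args]
  end.

Definition wf_prog (p : prog) : bool :=
  match p with
  | nil => false
  | (m, _) :: _ => (m == 1) && all (fun d => wf_expr (map fst p) d.1 d.2) p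
  end.

(* Big-step call-by-value semantics. [eval p rho e v n] says that there is a
   derivation tree of  p, rho |- e -> v  with exactly n nodes. *)
Inductive eval (p : prog) : seq value -> expr -> value -> nat -> Prop :=
| ev_true rho : eval p rho ETrue (VB true) 1
| ev_false rho : eval p rho EFalse (VB false) 1
| ev_nil rho : eval p rho ENil (VL [::]) 1
| ev_var rho i v : onth rho i = Some v -> eval p rho (EVar i) v 1
| ev_not rho e b n : eval p rho e (VB b) n -> eval p rho (ENot e) (VB (~~ b)) n.+1
| ev_null rho e l n : eval p rho e (VL l) n -> eval p rho (ENull e) (VB (nilp l)) n.+1
| ev_head rho e b l n : eval p rho e (VL (b :: l)) n -> eval p rho (EHead e) (VB b) n.+1
| ev_tail rho e b l n : eval p rho e (VL (b :: l)) n -> eval p rho (ETail e) (VL l) n.+1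
| ev_if_true rho e0 e1 e2 v n0 n1 :
    eval p rho e0 (VB true) n0 -> eval p rho e1 v n1 ->
    eval p rho (EIf e0 e1 e2) v (n0 + n1).+1
| ev_if_false rho e0 e1 e2 v n0 n2 :
    eval p rho e0 (VB false) n0 -> eval p rho e2 v n2 ->
    eval p rho (EIf e0 e1 e2) v (n0 + n2).+1
| ev_call rho f args m body vs ns v n :
    onth p f = Some (m, body) -> size args = m ->
    eval_list p rho args vs ns ->
    eval p vs body v n ->
    eval p rho (ECall f args) v (ns + n).+1
with eval_list (p : prog) : seq value -> seq expr -> seq value -> nat -> Prop :=
| evl_nil rho : eval_list p rho [::] [::] 0
| evl_cons rho e es v vs n ns :
    eval p rho e v n -> eval_list p rho es vs ns ->
    eval_list p rho (e :: es) (v :: vs) (n + ns).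

(* The run of p on input x: the computation tree is the derivation of the body
   of the entry function in the environment [x1 |-> x]; it has time nodes.
   p terminates on x iff such a derivation exists. *)
Definition run (p : prog) (x : seq bool) (v : value) (time : nat) : Prop :=
  exists body, exists rest, p = (1, body) :: rest /\ eval p [:: VL x] body v time.

(* Tail-form analysis alpha : Exp -> {X, T, N}, with order X < T < N. *)
Inductive tag : Type := X | T | N.

Definition tag_max (a b : tag) : tag :=
  match a, b with
  | N, _ | _, N => N
  | T, _ | _, T => T
  | X, X => X
  end.

Fixpoint alpha (e : expr) : tag :=
  match e with
  | ETrue | EFalse | ENil | EVar _ => X
  | ENot e | ENull e | EHead e | ETail e =>
      match alpha e with X => X | _ => N end
  | EIf e0 e1 e2 =>
      match alpha e0 with X => tag_max (alpha e1) (alpha e2) | _ => N end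
  | ECall _ args =>
      if (fix allX (l : seq expr) : bool :=
            match l with
            | nil => true
            | a :: l' => match alpha a with X => allX l' | _ => false end
            end) args
      then T else N
  end.

Definition tail_form (e : expr) : bool :=
  match alpha e with X | T => true | N => false end.

Definition CFTR (p : prog) : Prop :=
  wf_prog p /\ all (fun d => tail_form d.2) p.

(* Main.v *)
Require Import Defs.
From mathcomp Require Import all_boot all_order all_algebra.
From mathcomp Require Import zify.
From HB Require Import structures.
Import GRing.Theory Num.Theory.

Definition v2s (v : value) : bool + seq bool :=
  match v with VB b => inl b | VL l => inr l end.
Definition s2v (s : bool + seq bool) : value :=
  match s with inl b => VB b | inr l => VL l end.
Lemma v2sK : cancel v2s s2v. Proof. by case. Qed.
HB.instance Definition _ := Equality.copy value (can_type v2sK).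

Scheme eval_mind := Minimality for eval Sort Prop
with eval_list_mind := Minimality for eval_list Sort Prop.

Section Det.
Variable p : prog.
Let P rho e v n := forall v' n', eval p rho e v' n' -> v = v' /\ n = n'.
Let Q rho es vs ns := forall vs' ns', eval_list p rho es vs' ns' -> vs = vs' /\ ns = ns'.

Ltac det_tac :=
  intros; match goal with H : _ |- _ => inversion H; subst; clear H end;
  repeat match goal with
  | IH : forall v' n', eval _ ?r ?e v' n' -> _, H : eval _ ?r ?e _ _ |- _ =>
      let a := fresh in let b := fresh in
      case: (IH _ _ H) => a b; clear H; try (injection a; intros); subst
  | IH : forall v' n', eval_list _ ?r ?e v' n' -> _, H : eval_list _ ?r ?e _ _ |- _ =>
      let a := fresh in let b := fresh in
      case: (IH _ _ H) => a b; clear H; subst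
  | H1 : onth ?p ?f = Some _, H2 : onth ?p ?f = Some _ |- _ =>
      rewrite H1 in H2; case: H2; intros; subst
  end; try congruence; auto.

Lemma det_all : (forall rho e v n, eval p rho e v n -> P rho e v n) /\
                (forall rho es vs ns, eval_list p rho es vs ns -> Q rho es vs ns).
Proof.
split; [apply: (@eval_mind p P Q) | apply: (@eval_list_mind p P Q)];
  rewrite /P /Q; try det_tac.

Qed.
End Det.

Fixpoint esize (e : expr) : nat :=
  match e with
  | ETrue | EFalse | ENil | EVar _ => 1
  | ENot e | ENull e | EHead e | ETail e => (esize e).+1
  | EIf e0 e1 e2 => (esize e0 + esize e1 + esize e2).+1
  | ECall _ args => (sumn (map esize args)).+1
  end.

Fixpoint allXl (l : seq expr) : bool :=
  match l with
  | nil => true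
  | a :: l' => match alpha a with X => allXl l' | _ => false end
  end.

Lemma alpha_call f args : alpha (ECall f args) = if allXl args then T else N.
Proof. by []. Qed.

Definition goodvals (x : seq bool) : seq value :=
  [:: VB true, VB false & [seq VL (drop k x) | k <- iota 0 (size x).+1]].

Lemma good_bool x b : VB b \in goodvals x.
Proof. by case: b; rewrite !inE. Qed.

Lemma good_L x l : (VL l \in goodvals x) = (l \in [seq drop k x | k <- iota 0 (size x).+1]).
Proof.
rewrite /goodvals (in_cons (VB true)) (in_cons (VB false)).
have ne b : (VL l == VB b) = false by [].
rewrite !ne !orFb.
have -> : [seq VL (drop k x) | k <- iota 0 (size x).+1] = map VL [seq drop k x | k <- iota 0 (size x).+1].
  by rewrite -map_comp.
by rewrite mem_map // => a b [].
Qed.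

Lemma good_nil x : VL [::] \in goodvals x.
Proof.
rewrite good_L; apply/mapP; exists (size x); last by rewrite drop_size.
rewrite mem_iota; lia.
Qed.

Lemma good_in x : VL x \in goodvals x.
Proof.
rewrite good_L; apply/mapP; exists 0; last by rewrite drop0.
rewrite mem_iota; lia.
Qed.

Lemma good_tail x b l : VL (b :: l) \in goodvals x -> VL l \in goodvals x.
Proof.
rewrite !good_L => /mapP [k]; rewrite mem_iota add0n => Hk Hd.
apply/mapP; exists k.+1.
  rewrite mem_iota add0n ltnS; case: (ltnP k (size x)) => // Hk'.
  by move: Hd; rewrite drop_oversize.
by rewrite -add1n -drop_drop -Hd drop1.
Qed.

Lemma onth_mem (A : eqType) (rho : seq A) i v : onth rho i = Some v -> v \in rho.
Proof.
elim: rho i => [|a r IH] [|i] //=; first by case=> ->; rewrite mem_head.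
by move=> /IH; rewrite inE => ->; rewrite orbT.
Qed.

Lemma Xeval p x rho e v n : eval p rho e v n -> alpha e = X ->
  all (mem (goodvals x)) rho -> n <= esize e /\ v \in goodvals x.
Proof.
elim=> {rho e v n} /=.
- by move=> *; rewrite good_bool.
- by move=> *; rewrite good_bool.
- by move=> *; rewrite good_nil.
- by move=> rho i v /onth_mem Hv _ /allP /(_ _ Hv).
- move=> rho e b n _ IH; case E: (alpha e); [move=> _ Hr|by case|by case].
  by case: (IH E Hr) => *; rewrite good_bool; split => //; lia.
- move=> rho e b n _ IH; case E: (alpha e); [move=> _ Hr|by case|by case].
  by case: (IH E Hr) => *; rewrite good_bool; split => //; lia.
- move=> rho e b l n _ IH; case E: (alpha e); [move=> _ Hr|by case|by case].
  by case: (IH E Hr) => *; rewrite good_bool; split => //; lia.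
- move=> rho e b l n _ IH; case E: (alpha e); [move=> _ Hr|by case|by case].
  case: (IH E Hr) => H1 H2; split; [lia | exact: good_tail H2].
- move=> rho e0 e1 e2 v n0 n1 _ IH0 _ IH1.
  case E0: (alpha e0); [|by case|by case]; case E1: (alpha e1); case: (alpha e2); rewrite /=; try by case.
  move=> _ Hr.
  case: (IH0 E0 Hr); case: (IH1 E1 Hr) => *; split=> //; lia.
- move=> rho e0 e1 e2 v n0 n1 _ IH0 _ IH1.
  case E0: (alpha e0); [|by case|by case]; case E1: (alpha e2); case: (alpha e1); rewrite /=; try by case.
  move=> _ Hr.
  case: (IH0 E0 Hr); case: (IH1 E1 Hr) => *; split=> //; lia.
- move=> rho f args m body vs ns v n _ _ _ _ _; rewrite -/(allXl args); case: (allXl args) => H; discriminate H.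
Qed.

Lemma XLeval p x rho es vs ns : eval_list p rho es vs ns -> allXl es ->
  all (mem (goodvals x)) rho -> ns <= sumn (map esize es) /\ all (mem (goodvals x)) vs /\ size vs = size es.
Proof.
elim=> {rho es vs ns} //= rho e es v vs n ns He _ IH.
case Ha: (alpha e) => // /IH H /[dup] Hr /H [H1 [H2 H3]].
case: (@Xeval _ x _ _ _ _ He Ha Hr) => H4 H5; rewrite H5 H2 H3; split=> //; lia.
Qed.

Definition Tres p x e v n :=
  n <= esize e \/ exists f m body vs n',
    [/\ onth p f = Some (m, body), size vs = m, all (mem (goodvals x)) vs,
        eval p vs body v n' & n <= n' + esize e /\ n' < n].

Lemma Teval p x rho e v n : eval p rho e v n -> alpha e <> N ->
  all (mem (goodvals x)) rho -> Tres p x e v n.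
Proof.
rewrite /Tres; elim=> {rho e v n} /=.
- by left.
- by left.
- by left.
- by left.
- move=> rho e b n He _; case E: (alpha e); try by move=> H; exfalso; apply: H.
  move=> _ Hr; left.
  by case: (@Xeval _ x _ _ _ _ He E Hr).
- move=> rho e b n He _; case E: (alpha e); try by move=> H; exfalso; apply: H.
  move=> _ Hr; left.
  by case: (@Xeval _ x _ _ _ _ He E Hr).
- move=> rho e b l n He _; case E: (alpha e); try by move=> H; exfalso; apply: H.
  move=> _ Hr; left.
  by case: (@Xeval _ x _ _ _ _ He E Hr).
- move=> rho e b l n He _; case E: (alpha e); try by move=> H; exfalso; apply: H.
  move=> _ Hr; left.
  by case: (@Xeval _ x _ _ _ _ He E Hr).
- move=> rho e0 e1 e2 v n0 n1 He0 _ _ IH1.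
  case E0: (alpha e0); try by move=> H; exfalso; apply: H.
  move=> HN Hr.
  have H1 : alpha e1 <> N by move: HN; case: (alpha e1); case: (alpha e2) => //= H ?; apply: H.
  case: (@Xeval _ x _ _ _ _ He0 E0 Hr) => Hn0 _.
  case: (IH1 H1 Hr) => [Hn1|[f [m [body [vs [n' [? ? ? ? [? ?]]]]]]]].
    left; lia.
  right; exists f, m, body, vs, n'; split => //; lia.
- move=> rho e0 e1 e2 v n0 n1 He0 _ _ IH1.
  case E0: (alpha e0); try by move=> H; exfalso; apply: H.
  move=> HN Hr.
  have H1 : alpha e2 <> N by move: HN; case: (alpha e1); case: (alpha e2) => //= H ?; apply: H.
  case: (@Xeval _ x _ _ _ _ He0 E0 Hr) => Hn0 _.
  case: (IH1 H1 Hr) => [Hn1|[f [m [body [vs [n' [? ? ? ? [? ?]]]]]]]].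
    left; lia.
  right; exists f, m, body, vs, n'; split => //; lia.
- move=> rho f args m body vs ns v n Hf Hs Hl Hb _.
  rewrite -/(allXl args); case E: (allXl args); last by move=> H; exfalso; apply: H.
  move=> _ Hr.
  case: (@XLeval _ x _ _ _ _ Hl E Hr) => H1 [H2 H3].
  right; exists f, m, body, vs, n; split => //; [congruence | lia].
Qed.

Fixpoint tuples (A : Type) (s : seq A) (m : nat) : seq (seq A) :=
  if m is m'.+1 then [seq a :: t | a <- s, t <- tuples A s m'] else [:: [::]].

Lemma size_tuples (A : Type) (s : seq A) m : size (tuples _ s m) = size s ^ m.
Proof. by elim: m => [|m IH] //=; rewrite size_allpairs IH expnS. Qed.

Lemma mem_tuples (A : eqType) (s : seq A) vs :
  all (mem s) vs -> vs \in tuples _ s (size vs).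
Proof.
elim: vs => [|a vs IH] /=; first by rewrite mem_seq1.
by case/andP => Ha /IH Hv; apply: (allpairs_f (fun a t => a :: t)).
Qed.

Definition allstates (p : prog) (x : seq bool) : seq (nat * seq value) :=
  [seq (f, vs) | f <- iota 0 (size p), vs <- tuples _ (goodvals x) (nth 0 (map fst p) f)].

Lemma onth_info (p : prog) f d : onth p f = Some d ->
  f < size p /\ nth 0 (map fst p) f = d.1 /\ esize d.2 <= sumn [seq esize d.2 | d <- p].
Proof.
elim: p f => [|a p IH] [|f] //=.
  by case=> ->; split=> //; split => //; lia.
move=> /IH [H1 [H2 H3]]; split; [lia| split=> //; lia].
Qed.

Lemma onth_all (A : Type) (P : pred A) (p : seq A) f d :
  all P p -> onth p f = Some d -> P d.
Proof.
elim: p f => [|a p IH] [|f] //=; first by case/andP=> ? _ [<-].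
by case/andP=> _ H /(IH _ H).
Qed.

Lemma mem_allstates p x f m body vs : onth p f = Some (m, body) -> size vs = m ->
  all (mem (goodvals x)) vs -> (f, vs) \in allstates p x.
Proof.
move=> /(@onth_info _ _ _) [H1 [H2 _]] Hs Hg.
apply/allpairsPdep; exists f, vs; split => //; first by rewrite mem_iota; lia.
by rewrite H2 /= -Hs; apply: mem_tuples.
Qed.

Lemma sumn_bound (A : Type) (g : A -> nat) B l : (forall a, g a <= B) ->
  sumn (map g l) <= size l * B.
Proof. move=> H; elim: l => [|a l IH] //=; have := H a; lia. Qed.

Lemma size_goodvals x : size (goodvals x) = (size x + 3).
Proof. by rewrite /goodvals /= size_map size_iota; lia. Qed.

Lemma nth_le_sumn l i : nth 0 l i <= sumn l.
Proof. elim: l i => [|a l IH] [|i] //=; [lia | have := IH i; lia]. Qed.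

Lemma size_allstates p x :
  size (allstates p x) <= size p * (size x + 3) ^ sumn (map fst p).
Proof.
rewrite /allstates size_allpairs_dep.
have := @sumn_bound nat (fun f => size (tuples _ (goodvals x) (nth 0 [seq i.1 | i <- p] f)))
  ((size x + 3) ^ sumn (map fst p)) (iota 0 (size p)).
rewrite size_iota; apply => f; rewrite size_tuples size_goodvals.
apply: leq_pexp2l; [lia | exact: nth_le_sumn].
Qed.

Definition Cst (p : prog) := (sumn [seq esize d.2 | d <- p]).+1.

Lemma count p x (Hp : all (fun d => tail_form d.2) p) n :
  forall f m body vs v L, onth p f = Some (m, body) -> size vs = m ->
  all (mem (goodvals x)) vs -> eval p vs body v n -> uniq L ->
  {subset L <= allstates p x} ->
  (forall s, s \in L -> exists m' body' v' n', onth p s.1 = Some (m', body') /\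
       eval p s.2 body' v' n' /\ n < n') ->
  n <= Cst p * (size (allstates p x) - size L).
Proof.
elim/ltn_ind: n => n IH f m body vs v L Hf Hs Hg He Hu Hsub HL.
have Hin := @mem_allstates _ x _ _ _ _ Hf Hs Hg.
have Hnot : (f, vs) \notin L.
  apply/negP => /HL [m' [body' [v' [n' [/= Hf' [He' Hlt]]]]]].
  rewrite Hf in Hf'; case: Hf' => _ Eb; subst body'.
  case: ((det_all p).1 _ _ _ _ He _ _ He') => _ E; lia.
have Hsz : size ((f, vs) :: L) <= size (allstates p x).
  apply: uniq_leq_size; first by rewrite /= Hnot Hu.
  by move=> s; rewrite inE => /orP [/eqP ->|/Hsub].
have {Hsz} Hsz : size L < size (allstates p x) by exact: Hsz.
have Hc : esize body < Cst p by have := (@onth_info _ _ _ Hf).2.2; rewrite /Cst /=; lia.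
have HT : alpha body <> N.
  have := @onth_all _ _ _ _ _ Hp Hf; rewrite /tail_form /=; by case: (alpha body).
set D := size (allstates p x) - size L.
have HD : D = (D - 1).+1 by rewrite /D; lia.
case: (@Teval p x _ _ _ _ He HT Hg) => [Hn|[f' [m' [body' [vs' [n' [Hf' Hs' Hg' He' [Hle Hlt]]]]]]]].
  rewrite HD mulnS; nia.
have := IH n' Hlt f' m' body' vs' v ((f, vs) :: L) Hf' Hs' Hg' He'.
rewrite /= Hnot Hu => /(_ erefl).
have Hsub' : {subset (f, vs) :: L <= allstates p x}.
  by move=> s; rewrite inE => /orP [/eqP ->|/Hsub].
move=> /(_ Hsub') H.
have : n' <= Cst p * (size (allstates p x) - (size L).+1).
  apply: H => s; rewrite inE => /orP [/eqP ->|/HL [m'' [b'' [v'' [n'' [? [? ?]]]]]]].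
    by exists m, body, v, n.
  exists m'', b'', v'', n''; split => //; split => //; lia.
have -> : size (allstates p x) - (size L).+1 = D - 1 by rewrite /D; lia.
rewrite HD mulnS; nia.
Qed.

Theorem theorem3 (p : prog) :
  CFTR p ->
  exists pi : {poly int},
    forall (x : seq bool) (v : value) (time : nat),
      run p x v time -> (time%:Z <= pi.[(size x)%:Z])%R.
Proof.
case=> Hwf Ht.
set M := sumn (map fst p); set K := Cst p * size p.
exists ((K%:Z)%:P * ('X + 3%:P) ^+ M)%R.
move=> x v time [body [rest [Hp He]]].
have Hf : onth p 0 = Some (1, body) by rewrite Hp.
have Hg : all (mem (goodvals x)) [:: VL x] by rewrite /= good_in.
have H := @count p x Ht time 0 1 body [:: VL x] v [::] Hf erefl Hg He erefl
  (fun s (H : s \in [::]) => ltac:(by [])) (fun s (H : s \in [::]) => ltac:(by [])).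
rewrite subn0 in H.
have H2 := size_allstates p x.
have Hnat : time <= K * (size x + 3) ^ M.
  apply: (leq_trans H); rewrite /K -mulnA; exact: leq_mul.
rewrite hornerM hornerC horner_exp hornerD hornerX hornerC.
have -> : ((size x)%:Z + 3 = (size x + 3)%N%:Z)%R by rewrite PoszD.
have E : forall n k, ((n%:Z) ^+ k = (n ^ k)%N%:Z)%R by move=> n k; rewrite -!natz natrX.
by rewrite E -PoszM lez_nat.
Qed.
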